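(* Let $\bar d\ge1$, fix an index $*\in\{1,\dots,\bar d\}$, and for $\mathbf{c},\mathbf{r}\in[0,1]^{\bar d}$ define $h^C_{\mathbf{c},\mathbf{r}},h^S_{\mathbf{c},\mathbf{r}}:[0,1]^{\bar d}\to[0,1]$ by $h^C_{\mathbf{c},\mathbf{r}}(\mathbf{p})=1$ and $h^S_{\mathbf{c},\mathbf{r}}(\mathbf{p})=p_*$ if $c_i\le p_i<c_i+r_i$ for all $i$, and $h^C_{\mathbf{c},\mathbf{r}}(\mathbf{p})=h^S_{\mathbf{c},\mathbf{r}}(\mathbf{p})=0$ otherwise. Let $\mathcal{H}^C=\{h^C_{\mathbf{c},\mathbf{r}}\}$ and $\mathcal{H}^S=\{h^S_{\mathbf{c},\mathbf{r}}\}$ over all $\mathbf{c},\mathbf{r}$. Then $\operatorname{vc}(\mathcal{H}^S)\le 2\bar d$ and $\operatorname{vc}(\mathcal{H}^C)\le 2\bar d$.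
   Context: A countable set $I\subseteq[0,1]^{\bar d}$ is pseudo-shattered by a function class $\mathcal{H}$ if there is a function $g:I\to\mathbb{R}$ such that for every $J\subseteq I$ there is $h_J\in\mathcal{H}$ with $h_J(\mathbf{x})\le g(\mathbf{x})$ for $\mathbf{x}\in J$ and $h_J(\mathbf{x})>g(\mathbf{x})$ for $\mathbf{x}\in I\setminus J$. The pseudo-dimension $\operatorname{vc}(\mathcal{H})$ is the supremum of $|I|$ over sets $I$ pseudo-shattered by $\mathcal{H}$. *)

(* Defs.v *)
From HB Require Import structures.
From mathcomp Require Import all_boot all_order all_algebra.
From mathcomp Require Import boolp classical_sets cardinality reals.
Set Implicit Arguments. Unset Strict Implicit. Unset Printing Implicit Defensive.
Import Order.TTheory GRing.Theory Num.Theory.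
Local Open Scope classical_set_scope.
Local Open Scope ring_scope.

Section Defs.
Variable R : realType.
Variable d : nat.

Definition pt := 'rV[R]_d.

Definition unit_cube : set pt := [set p | forall i, 0 <= p ord0 i <= 1].

Definition in_box (c r p : pt) : bool :=
  [forall i, (c ord0 i <= p ord0 i) && (p ord0 i < c ord0 i + r ord0 i)].

Definition hC (c r : pt) : pt -> R := fun p => if in_box c r p then 1 else 0.
Definition hS (star : 'I_d) (c r : pt) : pt -> R :=
  fun p => if in_box c r p then p ord0 star else 0.

Definition HC : set (pt -> R) :=
  [set h | exists c r, unit_cube c /\ unit_cube r /\ h = hC c r].
Definition HS (star : 'I_d) : set (pt -> R) :=
  [set h | exists c r, unit_cube c /\ unit_cube r /\ h = hS star c r].

Definition pseudo_shattered (H : set (pt -> R)) (I : set pt) : Prop :=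
  exists g : pt -> R, forall J, J `<=` I ->
    exists2 h, H h & (forall x, J x -> h x <= g x) /\
                     (forall x, (I `\` J) x -> g x < h x).

Definition pseudo_dim_le (H : set (pt -> R)) (n : nat) : Prop :=
  forall I : set pt, I `<=` unit_cube -> countable I -> pseudo_shattered H I ->
    exists s : seq pt, [/\ uniq s, I = [set x | x \in s] & (size s <= n)%N].
End Defs.

(* Main.v *)
Require Import Defs.
From mathcomp Require Import all_boot all_order all_algebra.
From mathcomp Require Import boolp classical_sets cardinality reals.
From mathcomp Require Import zify.

Set Implicit Arguments. Unset Strict Implicit. Unset Printing Implicit Defensive.
Import Order.TTheory GRing.Theory Num.Theory.
Local Open Scope classical_set_scope.
Local Open Scope ring_scope.

Lemma fin_of_bound (T : eqType) (I : set T) (n : nat) :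
  (forall s : seq T, uniq s -> (forall x, x \in s -> I x) -> (size s <= n)%N) ->
  exists s : seq T, [/\ uniq s, I = [set x | x \in s] & (size s <= n)%N].
Proof.
move=> Hb.
suff: forall k (s : seq T), uniq s -> (forall x, x \in s -> I x) ->
   (n - size s <= k)%N ->
   exists t : seq T, [/\ uniq t, (forall x, x \in t -> I x) & (forall x, I x -> x \in t)].
  move=> /(_ n [::] erefl) [//|| t [ut tI It]]; first by rewrite subn0.
  exists t; split => //; last exact: Hb.
  by apply/seteqP; split => x /=; [apply: It|apply: tI].
elim=> [|k IH] s us sI hk.
- case: (pselect (forall x, I x -> x \in s)) => [all|]; first by exists s.
  move=> /existsNP [x /not_implyP [Ix xs]].
  have : (size (x :: s) <= n)%N.
    apply: Hb; first by rewrite /= us andbT; apply/negP.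
    by move=> z; rewrite inE => /orP [/eqP ->|/sI].
  move=> /= h; exfalso; lia.
- case: (pselect (forall x, I x -> x \in s)) => [all|]; first by exists s.
  move=> /existsNP [x /not_implyP [Ix xs]].
  apply: (IH (x :: s)).
  + by rewrite /= us andbT; apply/negP.
  + by move=> z; rewrite inE => /orP [/eqP ->|/sI].
  + rewrite /=; lia.
Qed.

Section Main.
Variables (R : realType) (d : nat).

Lemma ex_min (f : pt R d -> R) (s : seq (pt R d)) (y : pt R d) :
  exists2 a, a \in y :: s & forall x, x \in y :: s -> f a <= f x.
Proof.
elim: s y => [|z s IH] y.
  by exists y; [rewrite inE|move=> x; rewrite inE => /eqP ->].
have [a ain amin] := IH z.
case: (lerP (f y) (f a)) => hya.
- exists y; first by rewrite inE eqxx.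
  move=> x; rewrite inE => /orP [/eqP ->//|/amin]; exact: le_trans.
- exists a; first by rewrite inE ain orbT.
  move=> x; rewrite inE => /orP [/eqP ->|/amin//]; exact: ltW.
Qed.

Lemma ex_max (f : pt R d -> R) (s : seq (pt R d)) (y : pt R d) :
  exists2 a, a \in y :: s & forall x, x \in y :: s -> f x <= f a.
Proof.
have [a ain h] := ex_min (fun p => - f p) s y.
by exists a => // x /h; rewrite lerN2.
Qed.

Lemma box_key (s : seq (pt R d)) (y : pt R d) :
  exists K : seq (pt R d), [/\ size K = (2 * d)%N, {subset K <= y :: s} &
    forall c r, (forall x, x \in K -> in_box c r x) ->
      forall x, x \in y :: s -> in_box c r x].
Proof.
have [a Ha] := @fin_all_exists _ _
  (fun i (a : pt R d) => a \in y :: s /\ forall x, x \in y :: s -> a ord0 i <= x ord0 i)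
  (fun i => let: ex_intro2 a h1 h2 := ex_min (fun p => p ord0 i) s y in ex_intro _ a (conj h1 h2)).
have [b Hb] := @fin_all_exists _ _
  (fun i (a : pt R d) => a \in y :: s /\ forall x, x \in y :: s -> x ord0 i <= a ord0 i)
  (fun i => let: ex_intro2 a h1 h2 := ex_max (fun p => p ord0 i) s y in
     ex_intro _ a (conj h1 h2)).
exists ([seq a i | i <- enum 'I_d] ++ [seq b i | i <- enum 'I_d]); split.
- by rewrite size_cat !size_map -enumT size_enum_ord; lia.
- move=> x; rewrite mem_cat => /orP [] /mapP [i _ ->]; [exact: (Ha i).1|exact: (Hb i).1].
- move=> c r hK x xs; apply/forallP => i; apply/andP; split.
  + have : a i \in [seq a i | i <- enum 'I_d] ++ [seq b i | i <- enum 'I_d].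
      by rewrite mem_cat; apply/orP; left; apply/mapP; exists i; rewrite ?mem_enum.
    move/hK/forallP/(_ i)/andP => [h1 _].
    exact: le_trans h1 ((Ha i).2 x xs).
  + have : b i \in [seq a i | i <- enum 'I_d] ++ [seq b i | i <- enum 'I_d].
      by rewrite mem_cat; apply/orP; right; apply/mapP; exists i; rewrite ?mem_enum.
    move/hK/forallP/(_ i)/andP => [_ h2].
    exact: le_lt_trans ((Hb i).2 x xs) h2.
Qed.

Lemma main_gen (v : pt R d -> R) (H : set (pt R d -> R)) :
  (forall h, H h -> exists c r, h = fun p => if in_box c r p then v p else 0) ->
  (forall p, unit_cube p -> 0 <= v p) ->
  pseudo_dim_le H (2 * d).
Proof.
move=> HH v0 I sI _ [g Hg].
have g0 : forall x, I x -> 0 <= g x.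
  have [h Hh [hle _]] := Hg I (fun x hx => hx).
  move=> x Ix; have [c [r eh]] := HH h Hh.
  apply: le_trans (hle x Ix); rewrite eh; case: ifP => _ //; exact: v0 (sI _ Ix).
have gv : forall x, I x -> g x < v x.
  have [h Hh [_ hlt]] := Hg set0 (sub0set _).
  move=> x Ix; have [c [r eh]] := HH h Hh.
  apply: (lt_le_trans (hlt x (conj Ix (fun f => f)))); rewrite eh.
  case: ifP => _ //; exact: v0 (sI _ Ix).
apply: fin_of_bound => s us sI'.
rewrite leqNgt; apply/negP => hs.
case: s us sI' hs => [//|y s] us sI' hs.
have [K [sK Ks Kbox]] := box_key s y.
pose J := [set x | I x /\ x \notin K].
have [h Hh [hle hlt]] := Hg J (fun x hx => hx.1).
have [c [r eh]] := HH h Hh.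
have inK : forall x, x \in K -> in_box c r x.
  move=> x xK; have Ix := sI' x (Ks x xK).
  have hx : (I `\` J) x by split => // -[_ /negP]; apply.
  have := hlt x hx.
  rewrite eh; case: ifP => // _; rewrite ltNge (g0 x Ix) //.
case: (pselect (exists2 z, z \in y :: s & z \notin K)) => [[z zs zK]|nz].
  have Iz := sI' z zs.
  have := hle z (conj Iz zK); rewrite eh (Kbox c r inK z zs).
  by rewrite leNgt (gv z Iz).
have : {subset y :: s <= K}.
  move=> z zs; apply/negPn/negP => zK; apply: nz; by exists z.
move/(uniq_leq_size us); rewrite sK => h2.
move: hs h2; rewrite /=; lia.
Qed.
End Main.

Theorem lemmaA12 (R : realType) (d : nat) (hd : (0 < d)%N) (star : 'I_d) :
  @pseudo_dim_le R d (@HS R d star) (2 * d) /\ @pseudo_dim_le R d (@HC R d) (2 * d).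
Proof.
split.
- apply: (@main_gen R d (fun p => p ord0 star)).
    by move=> h [c [r [_ [_ ->]]]]; exists c, r.
  by move=> p /(_ star) /andP [].
- apply: (@main_gen R d (fun _ => 1)).
    by move=> h [c [r [_ [_ ->]]]]; exists c, r.
  by move=> p _.
Qed.
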